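(* Let $\alpha=(\alpha_1,\dots,\alpha_n)$ be a composition, $k\ge 0$ an integer, and $\lambda$ a partition with $\lambda_1-k\le n$. Let $\mathcal{T}$ be a semistandard Young tableau of shape $\mathcal{S}(\lambda,\alpha;k)$ whose reading word is lattice. Then every entry in the first row of the foundation $\lambda$ of $\mathcal{T}$ belongs to the set \[R_{\alpha,k}=\Big\{1+\sum_{i=1}^{j}\alpha_{n+1-i}\ :\ j=1,2,\dots,n\Big\}\cup\begin{cases}\{1\}&\text{if }k>0,\\ \emptyset&\text{if }k=0.\end{cases}\] Furthermore, the value $1$ occurs at most $k$ times in that row, and every other value occurs at most once in that row.
   Context: Diagrams use English convention: boxes $(r,c)$ with row index $r$ increasing downward and column index $c$ increasing rightward. For a composition $\alpha=(\alpha_1,\dots,\alpha_n)$ (positive parts), $|\alpha|=\sum_i\alpha_i$, and $\Delta_\alpha$ is the $180^\circ$ rotation of the Ferrers diagram of the partition $(n^{\alpha_n},(n-1)^{\alpha_{n-1}},\dots,1^{\alpha_1})$; concretely $\Delta_\alpha$ occupies rows $1,\dots,|\alpha|$, each row right-justified ending in column $n$, row lengths weakly increasing downward, with exactly $\alpha_i$ rows of length $i$. For $k\ge0$ and a partition $\lambda$ with $\lambda_1-k\le n$, $\mathcal{S}(\lambda,\alpha;k)$ (a ''fat staircase with bad foundation'') is the diagram consisting of $\Delta_\alpha$ together with a copy of the Ferrers diagram of $\lambda$ (the foundation) placed so that row $r$ of $\lambda$ occupies row $|\alpha|+r$, columns $1-k$ through $\lambda_r-k$; i.e. the first row of $\lambda$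 starts one row below and $k$ columns to the left of the bottom-left box of $\Delta_\alpha$. A tableau is a filling of the boxes with positive integers; it is semistandard (SSYT) if rows weakly increase left to right and columns strictly increase top to bottom. The reading word reads rows right to left, from the top row to the bottom row. A sequence is lattice if, for every $j\ge1$ and every initial segment, the number of $j$'s is at least the number of $(j+1)$'s. *)

(* Defs.v *)
From mathcomp Require Import all_boot all_order all_algebra.
Set Implicit Arguments. Unset Strict Implicit. Unset Printing Implicit Defensive.
Import GRing.Theory Num.Theory.

(* Diagrams: boxes (r, c) with r : nat (rows, 1-based, increasing downward)
   and c : int (columns, increasing rightward; may be <= 0 for the foundation). *)

Definition is_composition (alpha : seq nat) : bool := all (fun a => 0 < a)%N alpha.

Definition is_partition (lam : seq nat) : bool :=
  sorted geq lam && all (fun a => 0 < a)%N lam.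

Definition csize (alpha : seq nat) : nat := sumn alpha.

(* Row lengths of Delta_alpha, top to bottom: alpha_1 rows of length 1,
   then alpha_2 rows of length 2, ..., alpha_n rows of length n. *)
Definition delta_rowlens (alpha : seq nat) : seq nat :=
  flatten [seq nseq (nth 0 alpha i) i.+1 | i <- iota 0 (size alpha)].

Definition nrows (alpha lam : seq nat) : nat := (csize alpha + size lam)%N.

Definition row_len (alpha lam : seq nat) (r : nat) : nat :=
  if (1 <= r <= csize alpha)%N then nth 0 (delta_rowlens alpha) r.-1
  else if (csize alpha < r <= nrows alpha lam)%N then nth 0 lam (r - csize alpha).-1
  else 0.

(* Column of the rightmost box of row r: rows of Delta_alpha end in column n;
   row r' of the foundation ends in column lam_r' - k. *)
Definition row_hi (alpha lam : seq nat) (k : nat) (r : nat) : int :=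
  if (r <= csize alpha)%N then Posz (size alpha)
  else (Posz (nth 0 lam (r - csize alpha).-1) - Posz k)%R.

Definition row_cols (alpha lam : seq nat) (k r : nat) : seq int :=
  [seq (row_hi alpha lam k r - Posz i)%R | i <- iota 0 (row_len alpha lam r)].

Definition in_shape (alpha lam : seq nat) (k r : nat) (c : int) : bool :=
  (1 <= r <= nrows alpha lam)%N &&
  ((row_hi alpha lam k r - Posz (row_len alpha lam r) + 1 <= c)%R &&
   (c <= row_hi alpha lam k r)%R).

Definition is_SSYT (alpha lam : seq nat) (k : nat) (T : nat -> int -> nat) : Prop :=
  [/\ (forall r c, in_shape alpha lam k r c -> (0 < T r c)%N),
      (forall r c c', in_shape alpha lam k r c -> in_shape alpha lam k r c' ->
          (c <= c')%R -> (T r c <= T r c')%N) &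
      (forall r r' c, in_shape alpha lam k r c -> in_shape alpha lam k r' c ->
          (r < r')%N -> (T r c < T r' c)%N)].

(* Reading word: rows read right to left, from the top row to the bottom row. *)
Definition reading_word (alpha lam : seq nat) (k : nat) (T : nat -> int -> nat) : seq nat :=
  flatten [seq [seq T r c | c <- row_cols alpha lam k r]
          | r <- iota 1 (nrows alpha lam)].

Definition lattice (w : seq nat) : Prop :=
  forall (m j : nat), (1 <= j)%N ->
    (count_mem j.+1 (take m w) <= count_mem j (take m w))%N.

Definition Rset (alpha : seq nat) (k : nat) (v : nat) : bool :=
  has (fun j => v == (1 + sumn (drop (size alpha - j) alpha))%N) (iota 1 (size alpha))
  || ((0 < k)%N && (v == 1%N)).

(* Main.v *)
Require Import Defs.
From mathcomp Require Import all_boot all_order all_algebra zify.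
Import GRing.Theory Num.Theory.

Lemma count_add_pt (T : Type) (P Q R : pred T) (s : seq T) :
  (forall x, P x + Q x = R x) -> count P s + count Q s = count R s.
Proof. move=> H; elim: s => //= x s IH; rewrite -IH -(H x); lia. Qed.

Lemma count_le_pt (T : Type) (P Q R : pred T) (s : seq T) :
  (forall x, P x <= Q x + R x) -> count P s <= count Q s + count R s.
Proof. move=> H; elim: s => //= x s IH; have := H x; lia. Qed.

Lemma count_iota_lt (P : pred nat) i n : i <= n ->
  count P (iota 0 i) = count (fun j => (j < i) && P j) (iota 0 n).
Proof.
move=> Hin; rewrite -(subnKC Hin) iotaD count_cat add0n.
rewrite [count _ (iota i _)](eq_in_count (a2 := pred0)); last first.
  by move=> j; rewrite mem_iota => /andP[H1 _] /=; rewrite ltnNge H1.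
rewrite count_pred0 addn0; apply: eq_in_count => j; rewrite mem_iota /= => ->.
done.
Qed.

Lemma count_le1 (P : pred nat) m :
  (forall j, j < m -> P j -> count P (iota 0 j) = 0) -> count P (iota 0 m) <= 1.
Proof.
elim: m => [|m IH] H //.
rewrite -addn1 iotaD count_cat add0n /=.
case Pm: (P m).
  by rewrite (H m (ltnSn m) Pm).
rewrite addn0 addn0; apply: IH => j Hj; apply: H; lia.
Qed.

Lemma count_geq_iota m l : count (fun j => m <= j) (iota 0 l) = l - m.
Proof.
elim: l => [|l IH] //.
rewrite -addn1 iotaD count_cat add0n IH /=; case: (leqP m l); lia.
Qed.

Lemma latt_prefix w p s : lattice w -> w = p ++ s -> forall x, 2 <= x ->
  count_mem x p <= count_mem x.-1 p.
Proof.
move=> L E x Hx; have := L (size p) x.-1; rewrite E take_size_cat //.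
have -> : x.-1.+1 = x by lia.
by apply; lia.
Qed.

Definition g (s : nat) (al : seq nat) : seq nat :=
  flatten [seq nseq (nth 0 al i) (s + i).+1 | i <- iota 0 (size al)].

Lemma g_nil s : g s [::] = [::].
Proof. by []. Qed.

Lemma g_cons s a al : g s (a :: al) = nseq a s.+1 ++ g s.+1 al.
Proof.
rewrite /g /= addn0; congr (_ ++ _).
rewrite (iotaDl 1 0) -map_comp; congr flatten; apply: eq_map => i /=.
by rewrite add0n add1n addSnnS.
Qed.

Lemma delta_g al : delta_rowlens al = g 0 al.
Proof. by []. Qed.

Lemma g_size s al : size (g s al) = sumn al.
Proof.
elim: al s => [|a al IH] s //; by rewrite g_cons size_cat size_nseq IH.
Qed.

Lemma g_all s al : all (fun l => s < l <= s + size al) (g s al).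
Proof.
elim: al s => [|a al IH] s //; rewrite g_cons all_cat; apply/andP; split.
  rewrite all_nseq; apply/orP; right; apply/andP; split => //=; lia.
apply: sub_all (IH s.+1) => l /andP[H1 H2]; apply/andP; split => /=; lia.
Qed.

Lemma sorted_nseq_cat a x s : sorted leq s -> all (leq x) s -> sorted leq (nseq a x ++ s).
Proof.
move=> Hs Ha; elim: a => [|a IH] //=.
move: IH; case: a => [|a] /=.
  by case: s Hs Ha => //= y s' -> /andP[-> _].
by rewrite leqnn.
Qed.

Lemma g_sorted s al : sorted leq (g s al).
Proof.
elim: al s => [|a al IH] s //; rewrite g_cons; apply: sorted_nseq_cat => //.
apply: sub_all (g_all s.+1 al) => l /andP[H1 _]; exact: ltnW.
Qed.

Lemma g_count s al i : count (fun l => s + i < l) (g s al) = sumn (drop i al).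
Proof.
elim: al s i => [|a al IH] s i //.
rewrite g_cons count_cat count_nseq /=.
case: i => [|i].
  rewrite addn0 ltnSn mul1n drop0 /=; congr (_ + _).
  rewrite -(g_size s.+1 al); apply/eqP; rewrite -all_count.
  by apply: sub_all (g_all s.+1 al) => l /andP[H _]; apply: ltnW.
have -> : (s + i.+1 < s.+1) = false by lia.
rewrite mul0n add0n -(IH s.+1 i); apply: eq_count => l; congr (_ < _); lia.
Qed.

Lemma delta_count al i : count (fun l => i < l) (delta_rowlens al) = sumn (drop i al).
Proof. by rewrite delta_g -(g_count 0 al i). Qed.

Lemma sumn_drop_le al i j : i <= j -> sumn (drop j al) <= sumn (drop i al).
Proof.
move=> Hij; rewrite -(subnKC Hij) addnC -drop_drop.
set s := drop i al; have := sumn_cat (take (j - i) s) (drop (j - i) s).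
rewrite cat_take_drop; lia.
Qed.

Lemma sumn_drop_S al i : i < size al -> sumn (drop i al) = nth 0 al i + sumn (drop i.+1 al).
Proof. by move=> H; rewrite (drop_nth 0 H). Qed.

Lemma comp_pos al i : is_composition al -> i < size al -> 0 < nth 0 al i.
Proof. by move=> /allP H Hi; apply: H; rewrite mem_nth. Qed.

Lemma sumn_drop_lt al i j : is_composition al -> i < j -> i < size al ->
  sumn (drop j al) < sumn (drop i al).
Proof.
move=> Hc Hij Hi; rewrite (sumn_drop_S al i Hi).
have := comp_pos _ _ Hc Hi; have := sumn_drop_le al _ _ (Hij : i.+1 <= j); lia.
Qed.

Lemma in_shape_delta alpha lam k r i : (1 <= r <= csize alpha)%N ->
  in_shape alpha lam k r (Posz (size alpha) - Posz i)%R =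
  (i < nth 0 (delta_rowlens alpha) r.-1)%N.
Proof.
move=> /andP[H1 H2]; rewrite /in_shape /row_hi /row_len H1 H2 /nrows /=.
have -> : (r <= csize alpha + size lam)%N by lia.
apply/idP/idP.
  by move=> /andP[_ /andP[Ha Hb]]; lia.
by move=> Hi; apply/andP; split; [lia| apply/andP; split; lia].
Qed.

Definition rw alpha lam k (T : nat -> int -> nat) r :=
  [seq T r c | c <- row_cols alpha lam k r].

Lemma rw_delta alpha lam k T r : (1 <= r <= csize alpha)%N ->
  rw alpha lam k T r =
  [seq T r (Posz (size alpha) - Posz i)%R | i <- iota 0 (nth 0 (delta_rowlens alpha) r.-1)].
Proof.
move=> /andP[H1 H2]; rewrite /rw /row_cols /row_hi /row_len H1 H2 /= -map_comp.
by [].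
Qed.

Lemma row_len_f alpha lam : row_len alpha lam (csize alpha).+1 = nth 0 lam 0.
Proof.
rewrite /row_len /nrows.
have -> : (1 <= (csize alpha).+1 <= csize alpha)%N = false by lia.
case: lam => [|a lam] /=.
  by rewrite addn0 ltnn andbF.
rewrite ltnSn /= subSnn /=; have -> : ((csize alpha).+1 <= csize alpha + (size lam).+1)%N by lia.
by [].
Qed.

Lemma row_hi_f alpha lam k : row_hi alpha lam k (csize alpha).+1 = (Posz (nth 0 lam 0) - Posz k)%R.
Proof. by rewrite /row_hi ltnn subSnn. Qed.

Lemma rw_f alpha lam k T : rw alpha lam k T (csize alpha).+1 =
  [seq T (csize alpha).+1 (Posz (nth 0 lam 0) - Posz k - Posz j)%R | j <- iota 0 (nth 0 lam 0)].
Proof. by rewrite /rw /row_cols row_len_f row_hi_f -map_comp. Qed.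

Lemma in_shape_f alpha lam k j : (j < nth 0 lam 0)%N ->
  in_shape alpha lam k (csize alpha).+1 (Posz (nth 0 lam 0) - Posz k - Posz j)%R.
Proof.
move=> Hj; rewrite /in_shape row_len_f row_hi_f /nrows.
case: lam Hj => [|a lam] //= Hj.
apply/andP; split; first by lia.
apply/andP; split; lia.
Qed.

Lemma in_shape_f_inv alpha lam k c : in_shape alpha lam k (csize alpha).+1 c ->
  exists2 j, (j < nth 0 lam 0)%N & c = (Posz (nth 0 lam 0) - Posz k - Posz j)%R.
Proof.
rewrite /in_shape row_len_f row_hi_f => /andP[_ /andP[H1 H2]].
exists (absz (Posz (nth 0 lam 0) - Posz k - c)%R); lia.
Qed.

Definition W alpha lam k T r := flatten [seq rw alpha lam k T r' | r' <- iota 1 r].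

Lemma W_S alpha lam k T r : W alpha lam k T r.+1 = W alpha lam k T r ++ rw alpha lam k T r.+1.
Proof. by rewrite /W -[r.+1]addn1 iotaD map_cat flatten_cat /= cats0 addnC. Qed.

Lemma W_pref alpha lam k T r : (r <= nrows alpha lam)%N ->
  exists s, reading_word alpha lam k T = W alpha lam k T r ++ s.
Proof.
move=> H; have E : nrows alpha lam = (r + (nrows alpha lam - r))%N by lia.
rewrite /reading_word E iotaD map_cat flatten_cat.
by eexists.
Qed.

Definition tt_ alpha r i := count (fun l => i < l) (take r (delta_rowlens alpha)).

Lemma D_size alpha : size (delta_rowlens alpha) = csize alpha.
Proof. by rewrite delta_g g_size. Qed.

Lemma D_le alpha r : nth 0 (delta_rowlens alpha) r <= size alpha.
Proof.
case: (ltnP r (size (delta_rowlens alpha))) => H; last by rewrite nth_default.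
have := g_all 0 alpha; rewrite -delta_g => /all_nthP; move=> /(_ 0 r H) /andP[_]. 
by rewrite add0n.
Qed.

Lemma tt_S alpha r i : r < csize alpha ->
  tt_ alpha r.+1 i = tt_ alpha r i + (i < nth 0 (delta_rowlens alpha) r).
Proof.
move=> H; rewrite /tt_ (take_nth 0); last by rewrite D_size.
by rewrite -cats1 count_cat /= addn0.
Qed.

Definition Inv alpha (T : nat -> int -> nat) r := forall r', 1 <= r' <= r ->
  forall i, i < nth 0 (delta_rowlens alpha) r'.-1 ->
  T r' (Posz (size alpha) - Posz i)%R = tt_ alpha r' i.

Lemma W_count alpha lam k T r v : Inv alpha T r -> r <= csize alpha -> 0 < v ->
  count_mem v (W alpha lam k T r) = count (fun i => v <= tt_ alpha r i) (iota 0 (size alpha)).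
Proof.
move=> HI; elim: r HI => [|r IH] HI Hr Hv.
  by rewrite /W /=; apply/esym; elim: (iota 0 _) => //= i s ->; rewrite /tt_ take0 /=; lia.
have HI' : Inv alpha T r by move=> r' Hr'; apply: HI; lia.
rewrite W_S count_cat (IH HI' (ltnW Hr) Hv).
rewrite rw_delta; last by lia.
rewrite count_map /=.
set L := nth 0 (delta_rowlens alpha) r.
rewrite [count (preim _ _) _](eq_in_count (a2 := fun i => tt_ alpha r.+1 i == v)); last first.
  move=> i; rewrite mem_iota /= => Hi; rewrite /= HI //; lia.
rewrite (count_iota_lt _ L (size alpha)); last by apply: D_le.
apply: count_add_pt => i; rewrite tt_S //.
case: (i < L); rewrite /= ?addn0 ?addn1 ?andbF ?add0n ?addn0.
  by case: (ltngtP v (tt_ alpha r i)) => H; rewrite /=; lia.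
by [].
Qed.

Lemma count_le_pt_in (T : eqType) (P Q R : pred T) (s : seq T) :
  (forall x, x \in s -> P x <= Q x + R x) -> count P s <= count Q s + count R s.
Proof.
elim: s => //= x s IH H; have := H x (mem_head _ _).
have := IH (fun y Hy => H y (mem_behead (s := x :: s) Hy)); lia.
Qed.

Lemma D_sorted alpha : sorted leq (delta_rowlens alpha).
Proof. by rewrite delta_g; apply: g_sorted. Qed.

Lemma tt_pos_shape alpha r i : 0 < tt_ alpha r i -> r <= csize alpha ->
  (1 <= r) && (i < nth 0 (delta_rowlens alpha) r.-1).
Proof.
rewrite /tt_ -has_count => /hasP[x Hx Hix] Hr.
move/(nthP 0): Hx => [j Hj Ej].
have Hsz : size (take r (delta_rowlens alpha)) = r by rewrite size_takel // D_size.
rewrite Hsz in Hj; rewrite nth_take in Ej => //.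
apply/andP; split; first by lia.
apply: (leq_trans Hix); rewrite -Ej.
apply: (sorted_leq_nth leq_trans leqnn 0 (D_sorted alpha)); rewrite ?inE ?D_size; lia.
Qed.

Lemma tt_anti alpha r i i' : i <= i' -> tt_ alpha r i' <= tt_ alpha r i.
Proof. move=> H; apply: sub_count => l /=; lia. Qed.

Lemma delta_fill alpha lam k T :
  is_SSYT alpha lam k T -> lattice (reading_word alpha lam k T) ->
  forall r, r <= csize alpha -> Inv alpha T r.
Proof.
move=> HS HL; case: HS => Hpos Hrow Hcol.
elim=> [|r IH] Hr.
  by move=> r' Hr'; lia.
have HI := IH (ltnW Hr).
move=> r' Hr'; case: (leqP r' r) => Hr'r; first by apply: HI; lia.
have -> : r' = r.+1 by lia.
rewrite /=.
set L := nth 0 (delta_rowlens alpha) r.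
have HLn : L <= size alpha by apply: D_le.
have HR : 1 <= r.+1 <= csize alpha by lia.
elim/ltn_ind => i IHi Hi.
have ShR : forall j, j < L -> in_shape alpha lam k r.+1 (Posz (size alpha) - Posz j)%R.
  by move=> j Hj; rewrite in_shape_delta.
have Etts : tt_ alpha r.+1 i = tt_ alpha r i + 1 by rewrite tt_S // -/L Hi.
have Hlow : tt_ alpha r i + 1 <= T r.+1 (Posz (size alpha) - Posz i)%R.
  case: (posnP (tt_ alpha r i)) => H0.
    by rewrite H0; apply: Hpos; apply: ShR.
  have /andP[Hr1 Hir] := tt_pos_shape alpha r i H0 (ltnW Hr).
  have Shr : in_shape alpha lam k r (Posz (size alpha) - Posz i)%R.
    by rewrite in_shape_delta //; lia.
  rewrite -(HI r _ i Hir); last by lia.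
  rewrite addn1; apply: Hcol => //; exact: ShR.
rewrite Etts; apply/eqP; rewrite eqn_leq Hlow andbT.
rewrite leqNgt; apply/negP => Hup.
set U := fun j => T r.+1 (Posz (size alpha) - Posz j)%R.
set x := U i.
have Hup2 : tt_ alpha r i + 1 < x by exact: Hup.
have Hx2 : 2 <= x by rewrite /x /U; lia.
have [s1 E1] : exists s, reading_word alpha lam k T = W alpha lam k T r.+1 ++ s.
  by apply: W_pref; rewrite /nrows; lia.
have E2 : iota 0 L = iota 0 i ++ i :: iota i.+1 (L - i.+1).
  have -> : L = i + (L - i.+1).+1 by lia.
  by rewrite iotaD /= add0n; congr (_ ++ _ :: iota _ _); lia.
have Hpre : reading_word alpha lam k T =
   (W alpha lam k T r ++ (map U (iota 0 i) ++ [:: x])) ++ (map U (iota i.+1 (L - i.+1)) ++ s1).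
  by rewrite E1 W_S rw_delta // -/L E2 map_cat /= -!catA.
have Hlat := latt_prefix _ _ _ HL Hpre x Hx2.
rewrite !count_cat /= eqxx in Hlat.
have Hne : (x == x.-1) = false by apply/negbTE; lia.
rewrite Hne addn0 in Hlat.
have Hmono : forall j, j < i -> x <= U j.
  move=> j Hj; rewrite /x /U; apply: Hrow; try (apply: ShR; lia); lia.
have C0 : count (pred1 x.-1) (map U (iota 0 i)) = 0.
  apply/eqP; rewrite -leqn0 leqNgt -has_count; apply/hasP => [[y /mapP[j Hj ->]]] /=.
  move: Hj; rewrite mem_iota add0n => /andP[_ Hj] /eqP E.
  have := Hmono j Hj; lia.
rewrite C0 addn0 in Hlat.
rewrite !(W_count alpha lam k T r) // in Hlat; try lia.
rewrite count_map (count_iota_lt _ i (size alpha)) in Hlat; last by lia.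
have Hle : count (fun j => x.-1 <= tt_ alpha r j) (iota 0 (size alpha)) <=
   count (fun j => x <= tt_ alpha r j) (iota 0 (size alpha)) +
   count (fun j => (j < i) && preim U (pred1 x) j) (iota 0 (size alpha)).
  apply: count_le_pt_in => j; rewrite mem_iota add0n => /andP[_ Hjn] /=.
  case: (leqP x (tt_ alpha r j)) => Hxj; first by lia.
  case: (leqP x.-1 (tt_ alpha r j)) => Hxj'; last by lia.
  have Ej : tt_ alpha r j = x.-1 by lia.
  have Hji : j < i.
    rewrite ltnNge; apply/negP => Hij; have := tt_anti alpha r i j Hij; lia.
  rewrite Hji /=; apply/eqP.
  rewrite /U IHi //; last by lia.
  rewrite tt_S // Ej; have -> : j < L by lia.
  by rewrite /= addn1; lia.
move: Hlat Hle; rewrite /= addn0 => Hlat Hle; lia.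
Qed.

Definition Hs alpha i := sumn (drop i alpha).

Lemma WA_count alpha lam k T v : is_SSYT alpha lam k T -> lattice (reading_word alpha lam k T) ->
  0 < v -> count_mem v (W alpha lam k T (csize alpha)) =
  count (fun i => v <= Hs alpha i) (iota 0 (size alpha)).
Proof.
move=> HS HL Hv; rewrite (W_count _ _ _ _ _ _ (delta_fill _ _ _ _ HS HL _ (leqnn _))) //.
apply: eq_count => i /=; rewrite /tt_ -(D_size alpha) take_size delta_count.
by [].
Qed.

Lemma Hs_pos alpha i : is_composition alpha -> i < size alpha -> 0 < Hs alpha i.
Proof. move=> Hc Hi; rewrite /Hs sumn_drop_S //; have := comp_pos _ _ Hc Hi; lia. Qed.

Lemma Hs_count1 alpha v : is_composition alpha ->
  count (fun i => Hs alpha i == v) (iota 0 (size alpha)) <= 1.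
Proof.
move=> Hc; apply: count_le1 => j Hj /eqP Ej.
apply/eqP; rewrite -leqn0 leqNgt -has_count; apply/hasP => [[i]].
rewrite mem_iota add0n => /andP[_ Hij] /eqP Ei.
have := sumn_drop_lt alpha i j Hc Hij (ltn_trans Hij Hj); rewrite /Hs in Ei Ej; lia.
Qed.

Lemma found_key alpha lam k T j : is_SSYT alpha lam k T -> lattice (reading_word alpha lam k T) ->
  let y := fun j => T (csize alpha).+1 (Posz (nth 0 lam 0) - Posz k - Posz j)%R in
  j < nth 0 lam 0 -> 2 <= y j ->
  1 + count (fun j' => y j' == y j) (iota 0 j) <=
  count (fun i => Hs alpha i == (y j).-1) (iota 0 (size alpha)).
Proof.
move=> HS HL y Hj Hy2.
have HS' := HS; case: HS' => Hpos Hrow Hcol.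
set l := nth 0 lam 0.
have Hlam : 0 < size lam by move: Hj; rewrite /l; case: (lam).
have [s1 E1] : exists s, reading_word alpha lam k T = W alpha lam k T (csize alpha).+1 ++ s.
  by apply: W_pref; rewrite /nrows; lia.
have E2 : iota 0 l = iota 0 j ++ j :: iota j.+1 (l - j.+1).
  have -> : l = j + (l - j.+1).+1 by lia.
  by rewrite iotaD /= add0n; congr (_ ++ _ :: iota _ _); lia.
set x := y j.
have Hpre : reading_word alpha lam k T =
   (W alpha lam k T (csize alpha) ++ (map y (iota 0 j) ++ [:: x])) ++ (map y (iota j.+1 (l - j.+1)) ++ s1).
  by rewrite E1 W_S rw_f -/l E2 map_cat /= -!catA.
have Hlat := latt_prefix _ _ _ HL Hpre x Hy2.
rewrite !count_cat /= eqxx in Hlat.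
have Hne : (x == x.-1) = false by apply/negbTE; lia.
rewrite Hne addn0 in Hlat.
have Hmono : forall j', j' < j -> x <= y j'.
  move=> j' Hj'; rewrite /x /y; apply: Hrow; try (apply: in_shape_f; rewrite -/l; lia); lia.
have C0 : count (pred1 x.-1) (map y (iota 0 j)) = 0.
  apply/eqP; rewrite -leqn0 leqNgt -has_count; apply/hasP => [[z /mapP[j' Hj' ->]]] /=.
  move: Hj'; rewrite mem_iota add0n => /andP[_ Hj'] /eqP E.
  have := Hmono j' Hj'; lia.
rewrite C0 addn0 !(WA_count alpha lam k T) // in Hlat; try lia.
have Hadd := count_add_pt _ (fun i => x <= Hs alpha i) (fun i => Hs alpha i == x.-1)
   (fun i => x.-1 <= Hs alpha i) (iota 0 (size alpha)).
have : (forall i, (x <= Hs alpha i) + (Hs alpha i == x.-1) = (x.-1 <= Hs alpha i)).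
  move=> i; case: (ltngtP (Hs alpha i) x.-1) => H /=; try lia.
move=> /Hadd {}Hadd.
move: Hlat; rewrite count_map /= => Hlat.
have Ec : count (preim y (pred1 x)) (iota 0 j) = count (fun j0 => y j0 == x) (iota 0 j) by apply: eq_count.
rewrite Ec in Hlat; lia.
Qed.

Lemma above_found alpha lam k T j : is_composition alpha -> is_SSYT alpha lam k T ->
  lattice (reading_word alpha lam k T) ->
  (nth 0 lam 0 - k <= size alpha)%N ->
  (j + k < nth 0 lam 0)%N ->
  (2 <= T (csize alpha).+1 (Posz (nth 0 lam 0) - Posz k - Posz j)%R)%N.
Proof.
move=> Hc HS HL Hlk Hj.
have HS' := HS; case: HS' => Hpos Hrow Hcol.
set l := nth 0 lam 0 in Hlk Hj *.
set i := (size alpha + k + j - l)%N.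
have Hin : (i < size alpha)%N by rewrite /i; lia.
have Ec : (Posz (size alpha) - Posz i = Posz l - Posz k - Posz j)%R by rewrite /i; lia.
have Hp := Hs_pos alpha i Hc Hin.
have Htt : (0 < tt_ alpha (csize alpha) i)%N.
  by rewrite /tt_ -(D_size alpha) take_size delta_count.
have /andP[HA Hsh] := tt_pos_shape alpha (csize alpha) i Htt (leqnn _).
have Sh1 : in_shape alpha lam k (csize alpha) (Posz l - Posz k - Posz j)%R.
  by rewrite -Ec in_shape_delta // HA leqnn.
have Sh2 : in_shape alpha lam k (csize alpha).+1 (Posz l - Posz k - Posz j)%R.
  by apply: in_shape_f; rewrite -/l; lia.
have := Hcol _ _ _ Sh1 Sh2 (ltnSn _); have := Hpos _ _ Sh1; lia.
Qed.

Theorem mainTheorem1 (alpha lam : seq nat) (k : nat) (T : nat -> int -> nat) :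
  is_composition alpha ->
  is_partition lam ->
  (nth 0 lam 0 - k <= size alpha)%N ->
  is_SSYT alpha lam k T ->
  lattice (reading_word alpha lam k T) ->
  let r1 := (csize alpha).+1 in
  [/\ (forall c, in_shape alpha lam k r1 c -> Rset alpha k (T r1 c)),
      (count (fun c => T r1 c == 1%N) (row_cols alpha lam k r1) <= k)%N &
      (forall v, v != 1%N ->
         (count (fun c => T r1 c == v) (row_cols alpha lam k r1) <= 1)%N)].
Proof.
move=> Hc _ Hlk HS HL r1.
have HS' := HS; case: HS' => Hpos Hrow Hcol.
set l := nth 0 lam 0 in Hlk *.
set y := fun j => T r1 (Posz l - Posz k - Posz j)%R.
have Ecols : row_cols alpha lam k r1 = [seq (Posz l - Posz k - Posz j)%R | j <- iota 0 l].
  by rewrite /row_cols /r1 row_len_f row_hi_f.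
have Ypos : forall j, (j < l)%N -> (0 < y j)%N.
  by move=> j Hj; apply: Hpos; apply: in_shape_f.
split.
- move=> c /in_shape_f_inv [j Hj ->]; rewrite -/l in Hj *.
  have := Ypos j Hj; rewrite /y => Hy1.
  case: (leqP 2 (T r1 (Posz l - Posz k - Posz j)%R)) => Hy2.
    have := found_key alpha lam k T j HS HL Hj Hy2 => /=; rewrite -/l -/r1 => Hk.
    have : has (fun i => Hs alpha i == (T r1 (Posz l - Posz k - Posz j)%R).-1) (iota 0 (size alpha)).
      by rewrite has_count; lia.
    move=> /hasP[i]; rewrite mem_iota add0n => /andP[_ Hi] /eqP Ei.
    apply/orP; left; apply/hasP; exists (size alpha - i)%N.
      by rewrite mem_iota; lia.
    have -> : (size alpha - (size alpha - i) = i)%N by lia.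
    by apply/eqP; rewrite -/(Hs alpha i) Ei; lia.
  apply/orP; right; apply/andP; split; last by apply/eqP; lia.
  rewrite lt0n; apply/negP => /eqP Hk0.
  have := above_found alpha lam k T j Hc HS HL Hlk; rewrite -/l -/r1 Hk0 addn0 => H.
  move: Hy2; rewrite Hk0 => Hy2; have := H Hj; lia.
- rewrite Ecols count_map.
  have := count_le_pt_in _ (preim (fun j => (Posz l - Posz k - Posz j)%R) (fun c => T r1 c == 1%N))
     (fun j => l - k <= j)%N pred0 (iota 0 l).
  rewrite count_pred0 addn0 count_geq_iota => H; apply: leq_trans (H _) _; last by lia.
  move=> j; rewrite mem_iota add0n => /andP[_ Hj] /=.
  case: (leqP (l - k) j) => Hjk; first by case: (_ == _).
  have := above_found alpha lam k T j Hc HS HL Hlk; rewrite -/l -/r1 => H2.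
  have := H2 ltac:(lia); case: eqP => //=; lia.
- move=> v Hv1; rewrite Ecols count_map.
  apply: count_le1 => j Hj /= /eqP Ej.
  have := Ypos j Hj; rewrite /y Ej => Hv0.
  have Hv2 : (2 <= v)%N by move: Hv1; case: v Hv0 Ej => [|[|v]].
  have := found_key alpha lam k T j HS HL Hj; rewrite /= -/l -/r1 Ej => /(_ Hv2) H.
  have := Hs_count1 alpha v.-1 Hc.
  have -> : count (preim (fun j0 => (Posz l - Posz k - Posz j0)%R) (fun c => T r1 c == v)) (iota 0 j)
     = count (fun j' => T r1 (Posz l - Posz k - Posz j')%R == v) (iota 0 j) by apply: eq_count.
  lia.
Qed.
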